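(* Let $n\ge 2$ be odd. Then there exists a matching mechanism that is resolute and symmetric (i.e. $G^*$-symmetric).
   Context: Fix $n\ge 2$, $W=\{1,\dots,n\}$ (women), $M=\{n+1,\dots,2n\}$ (men), $I=W\cup M$. Permutations compose right-to-left. A preference profile is a function $p$ on $I$ assigning to each $x\in W$ a linear order $p(x)$ on $M$ and to each $y\in M$ a linear order $p(y)$ on $W$; $\mathcal{P}$ is the set of preference profiles. A matching is a permutation $\mu$ of $I$ with $\mu(W)=M$, $\mu(M)=W$ and $\mu(\mu(z))=z$ for all $z\in I$; $\mathcal{M}$ is the set of matchings. Let $G^*=\{\varphi\in\mathrm{Sym}(I):\{\varphi(W),\varphi(M)\}=\{W,M\}\}$. For a linear order $R$ on $X\subseteq I$ and $\varphi\in\mathrm{Sym}(I)$, $\varphi R$ is the relation on $\varphi(X)$ with $(a,b)\in\varphi R$ iff $(\varphi^{-1}(a),\varphi^{-1}(b))\in R$. For $p\in\mathcal{P}$ and $\varphi\in G^*$, $p^\varphi\in\mathcal{P}$ is defined by $p^\varphi(z)=\varphi\,p(\varphi^{-1}(z))$. For a permutation $\mu$, $\mu^\varphi=\varphi\mu\varphi^{-1}$, and for a set $S$ of permutations $S^\varphi=\{\mu^\varphi:\mu\in S\}$. A matching mechanism is a correspondence $F$ from $\mathcal{P}$ to $\mathcal{M}$. $F$ is resolute if $|F(p)|=1$ for all $p$. For $U\subseteq G^*$, $F$ is $U$-symmetric if $F(p^\varphi)=F(p)^\varphi$ for all $p\in\mathcal{P}$, $\varphi\in U$; symmetric means $G^*$-symmetric.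 *)

(* Defs.v *)
(* Agents are 'I_(2n) = {0,...,2n-1}; women are i < n,
   men are n <= i < 2n (a 0-based relabelling of {1..n} and {n+1..2n}). *)
From mathcomp Require Import all_boot all_order all_fingroup.
Set Implicit Arguments. Unset Strict Implicit. Unset Printing Implicit Defensive.

Local Open Scope group_scope.

Section Matching.
Variable n : nat.

Definition agent := 'I_(2 * n).

Definition women : {set agent} := [set i : agent | (i < n)%N].
Definition men : {set agent} := [set i : agent | (n <= i)%N].

Definition relI := {set agent * agent}.

Definition linear_order_on (X : {set agent}) (R : relI) : Prop :=
  [/\ forall a b, (a, b) \in R -> (a \in X) && (b \in X),
      forall a, a \in X -> (a, a) \in R,
      forall a b, (a, b) \in R -> (b, a) \in R -> a = b,
      forall a b c, (a, b) \in R -> (b, c) \in R -> (a, c) \in R &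
      forall a b, a \in X -> b \in X -> ((a, b) \in R) || ((b, a) \in R)].

Definition profile := {ffun agent -> relI}.

Definition is_profile (p : profile) : Prop :=
  (forall x, x \in women -> linear_order_on men (p x)) /\
  (forall y, y \in men -> linear_order_on women (p y)).

Definition is_matching (mu : {perm agent}) : Prop :=
  [/\ mu @: women = men, mu @: men = women & forall z, mu (mu z) = z].

Definition Gstar : {set {perm agent}} :=
  [set phi : {perm agent} |
     ((phi @: women == women) && (phi @: men == men))
  || ((phi @: women == men) && (phi @: men == women))].

Definition rel_act (phi : {perm agent}) (R : relI) : relI :=
  [set ab : agent * agent | ((phi^-1) ab.1, (phi^-1) ab.2) \in R].

Definition profile_act (p : profile) (phi : {perm agent}) : profile :=
  [ffun z => rel_act phi (p ((phi^-1) z))].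

(* mu^phi = phi ∘ mu ∘ phi^-1 (right-to-left composition).  In MathComp,
   (s * t) x = t (s x), so this is phi^-1 * mu * phi. *)
Definition perm_conj (mu phi : {perm agent}) : {perm agent} :=
  phi^-1 * mu * phi.

Definition set_conj (S : {set {perm agent}}) (phi : {perm agent})
  : {set {perm agent}} := [set perm_conj mu phi | mu in S].

(* A matching mechanism: a correspondence from P to M.  We model it as a
   function on all candidate profiles whose values on P are sets of matchings
   (values outside P are irrelevant). *)
Definition mechanism (F : profile -> {set {perm agent}}) : Prop :=
  forall p, is_profile p -> forall mu, mu \in F p -> is_matching mu.

Definition resolute (F : profile -> {set {perm agent}}) : Prop :=
  forall p, is_profile p -> #|F p| = 1%N.

Definition U_symmetric (U : {set {perm agent}})
  (F : profile -> {set {perm agent}}) : Prop :=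
  forall p phi, is_profile p -> phi \in U ->
    F (profile_act p phi) = set_conj (F p) phi.

Definition symmetric_mech F : Prop := U_symmetric Gstar F.

End Matching.

(* Main.v *)
Require Import Defs.
From mathcomp Require Import all_boot all_order all_fingroup all_solvable.
Set Implicit Arguments. Unset Strict Implicit. Unset Printing Implicit Defensive.

Section Aux.
Local Open Scope group_scope.
Variable n : nat.
Local Notation agent := (agent n).
Local Notation W := (women n).
Local Notation M := (men n).

Lemma inW (x : agent) : (x \in W) = (x < n)%N.
Proof. by rewrite inE. Qed.

Lemma inM (x : agent) : (x \in M) = (x \notin W).
Proof. by rewrite !inE -leqNgt. Qed.

Lemma mem_imset_perm (phi : {perm agent}) (X : {set agent}) a :
  (a \in phi @: X) = ((phi^-1) a \in X).
Proof. by rewrite -{1}(permKV phi a) mem_imset //; apply: perm_inj. Qed.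

Definition sideP (phi : {perm agent}) (b : bool) :=
  forall x, (phi x \in W) = b (+) (x \in W).

Lemma gstarP phi : reflect (exists b, sideP phi b) (phi \in Gstar n).
Proof.
apply: (iffP idP).
  rewrite inE => /orP [/andP [/eqP HW /eqP HM] | /andP [/eqP HW /eqP HM]].
    exists false => x /=; case xW: (x \in W).
      by rewrite -HW imset_f.
    by apply/negbTE; rewrite -inM -HM imset_f // inM xW.
  exists true => x /=; case xW: (x \in W).
    by apply/negbTE; rewrite -inM -HW imset_f.
  by rewrite -HM imset_f // inM xW.
move=> [b Hb].
have Hinv a : ((phi^-1) a \in W) = b (+) (a \in W).
  by rewrite -{2}(permKV phi a) Hb addbA addbb.
rewrite inE; case: b Hb Hinv => Hb Hinv.
  apply/orP; right; apply/andP; split; apply/eqP/setP => a;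
    by rewrite mem_imset_perm ?inM Hinv //= ?negbK.
apply/orP; left; apply/andP; split; apply/eqP/setP => a;
  by rewrite mem_imset_perm ?inM Hinv.
Qed.

Lemma gstar_group_set : group_set (Gstar n).
Proof.
apply/group_setP; split.
  by apply/gstarP; exists false => x; rewrite perm1.
move=> x y /gstarP [b1 H1] /gstarP [b2 H2]; apply/gstarP.
exists (b2 (+) b1) => z; by rewrite permM H2 H1 addbA.
Qed.

Canonical GstarG := Group gstar_group_set.

Lemma profile_act1 (p : profile n) : profile_act p 1 = p.
Proof.
apply/ffunP => z; rewrite ffunE !invg1 !perm1.
by apply/setP => -[a b]; rewrite /rel_act inE /= !invg1 !perm1.
Qed.

Lemma profile_actM (p : profile n) a b :
  profile_act (profile_act p a) b = profile_act p (a * b).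
Proof.
apply/ffunP => z; rewrite !ffunE.
apply/setP => -[x y]; rewrite /rel_act !inE /= invMg !permM.
by [].
Qed.

Definition Stab (q : profile n) := [set h | profile_act q h == q].

Lemma stab_group_set q : group_set (Stab q).
Proof.
apply/group_setP; split; first by rewrite inE profile_act1.
move=> x y; rewrite !inE => /eqP Hx /eqP Hy.
by rewrite -profile_actM Hx Hy.
Qed.

Canonical StabG q := Group (stab_group_set q).

End Aux.
Section Aux2.
Local Open Scope group_scope.
Variable n : nat.
Local Notation agent := (agent n).
Local Notation W := (women n).
Local Notation M := (men n).

Lemma in_rel_act (phi : {perm agent}) (R : relI n) a b :
  ((a, b) \in rel_act phi R) = (((phi^-1) a, (phi^-1) b) \in R).
Proof. by rewrite inE. Qed.

Lemma lo_act (X Y : {set agent}) R (phi : {perm agent}) : linear_order_on X R ->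
  (forall a, (a \in Y) = ((phi^-1) a \in X)) -> linear_order_on Y (rel_act phi R).
Proof.
move=> [H1 H2 H3 H4 H5] HY; split.
- by move=> a b; rewrite in_rel_act !HY => /H1.
- by move=> a; rewrite in_rel_act HY => /H2.
- move=> a b; rewrite !in_rel_act => Hab Hba.
  by apply: (perm_inj (s := phi^-1)); apply: H3.
- move=> a b c; rewrite !in_rel_act; exact: H4.
- by move=> a b; rewrite !in_rel_act !HY; apply: H5.
Qed.

Lemma side_inv phi b : sideP phi b -> forall a, ((phi^-1) a \in W) = b (+) (a \in W).
Proof. by move=> Hb a; rewrite -{2}(permKV phi a) Hb addbA addbb. Qed.

Lemma profile_act_profile (p : profile n) phi :
  is_profile p -> phi \in Gstar n -> is_profile (profile_act p phi).
Proof.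
move=> [HW HM] /gstarP [b Hb]; have Hi := side_inv Hb.
split => z Hz; rewrite ffunE.
  case: b Hb Hi => Hb Hi.
    apply: (lo_act (X := W)); first by apply: HM; rewrite inM Hi Hz.
    by move=> a; rewrite inM Hi.
  apply: (lo_act (X := M)); first by apply: HW; rewrite Hi.
  by move=> a; rewrite !inM Hi.
rewrite inM in Hz.
case: b Hb Hi => Hb Hi.
  apply: (lo_act (X := M)); first by apply: HW; rewrite Hi (negbTE Hz).
  by move=> a; rewrite !inM Hi /= negbK.
apply: (lo_act (X := W)); first by apply: HM; rewrite inM Hi.
by move=> a; rewrite Hi.
Qed.

Lemma lo_lt (X : {set agent}) R a b : linear_order_on X R -> (a, b) \in R -> a != b ->
  (#|[set c | (c, a) \in R]| < #|[set c | (c, b) \in R]|)%N.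
Proof.
move=> [H1 H2 H3 H4 H5] Hab Hne; apply: proper_card; apply/properP; split.
  apply/subsetP => c; rewrite !inE => Hca; exact: H4 Hca Hab.
exists b; first by rewrite inE; apply: H2; case/andP: (H1 _ _ Hab).
rewrite inE; apply/negP => Hba; move/eqP: Hne; apply; exact: H3.
Qed.

Lemma lo_fix (X : {set agent}) R (g : {perm agent}) : linear_order_on X R ->
  (forall a b, ((a, b) \in R) = ((g a, g b) \in R)) -> forall a, a \in X -> g a = a.
Proof.
move=> Hlo Hg a Ha; have [H1 H2 H3 H4 H5] := Hlo.
have Hc c : #|[set d | (d, g c) \in R]| = #|[set d | (d, c) \in R]|.
  have -> : [set d | (d, g c) \in R] = g @: [set d | (d, c) \in R].
    apply/setP => d; by rewrite mem_imset_perm !inE [RHS]Hg permKV.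
  by rewrite card_imset //; apply: perm_inj.
have gaX : g a \in X by have := H2 _ Ha; rewrite Hg => /H1 /andP [].
apply/eqP; apply: contraT => Hne.
case/orP: (H5 _ _ Ha gaX) => Hr.
  have Hne2 : a != g a by rewrite eq_sym.
  by have := lo_lt Hlo Hr Hne2; rewrite Hc ltnn.
by have := lo_lt Hlo Hr Hne; rewrite Hc ltnn.
Qed.

Lemma stab_fix_opp (q : profile n) h x : is_profile q -> h \in Gstar n ->
  profile_act q h = q -> h x = x ->
  forall a, (a \in W) != (x \in W) -> h a = a.
Proof.
move=> [HW HM] hG Hq hx a Ha.
have hix : (h^-1) x = x by rewrite -{1}hx permK.
have Hr c d : ((c, d) \in q x) = (((h^-1) c, (h^-1) d) \in q x).
  by rewrite -{1}Hq ffunE in_rel_act hix.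
suff : (h^-1) a = a by move=> E; rewrite -{1}E permKV.
case xW: (x \in W) Ha => /= Ha.
  by apply: (lo_fix (HW _ xW) Hr); rewrite inM; move: Ha; case: (a \in W).
by apply: (lo_fix (HM _ _) Hr); [rewrite inM xW | move: Ha; case: (a \in W)].
Qed.

Hypothesis npos : (0 < n)%N.

Lemma w0_lt : (0 < 2 * n)%N. Proof. by rewrite muln_gt0 npos. Qed.
Lemma m0_lt : (n < 2 * n)%N. Proof. by rewrite mul2n -addnn -{1}(addn0 n) ltn_add2l. Qed.
Definition w0 : agent := Ordinal w0_lt.
Definition m0 : agent := Ordinal m0_lt.

Lemma w0W : w0 \in W. Proof. by rewrite inW. Qed.
Lemma m0W : m0 \notin W. Proof. by rewrite inW /= ltnn. Qed.

Lemma stab_free (q : profile n) h x : is_profile q -> h \in Gstar n ->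
  profile_act q h = q -> h x = x -> h = 1.
Proof.
move=> Hp hG Hq hx.
have Hopp := stab_fix_opp Hp hG Hq hx.
have [y yx] : exists y, (y \in W) != (x \in W).
  by case: (x \in W); [exists m0; rewrite (negbTE m0W) | exists w0; rewrite w0W].
have Hy := stab_fix_opp Hp hG Hq (Hopp _ yx).
apply/permP => a; rewrite perm1.
case E: ((a \in W) == (x \in W)).
  apply: Hy; move/eqP: E => ->; by rewrite eq_sym.
by apply: Hopp; rewrite E.
Qed.

End Aux2.
Section Core.
Local Open Scope group_scope.
Variable n : nat.
Local Notation agent := (agent n).
Local Notation W := (women n).
Local Notation M := (men n).

Variable H : {group {perm agent}}.
Hypothesis HG : H \subset Gstar n.
Hypothesis Hfree : forall h x, h \in H -> h x = x -> h = 1.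

Lemma side_eq h a b : h \in H ->
  ((h a \in W) == (h b \in W)) = ((a \in W) == (b \in W)).
Proof.
move=> hH; have /gstarP [c Hc] := subsetP HG _ hH.
by rewrite !Hc; clear Hc; case: (a \in W); case: (b \in W); case: c.
Qed.

Lemma side_flip h a b : h \in H -> (a \in W) = (b \notin W) ->
  (h a \in W) = (h b \notin W).
Proof.
move=> hH E; have := side_eq a b hH; rewrite E.
by case: (h a \in W); case: (h b \in W); case: (b \in W).
Qed.

Lemma orbit_pick (u : agent) h : h \in H ->
  odflt 1 [pick k in H | k u == h u] = h.
Proof.
move=> hH; case: pickP => [k /andP [kH /eqP E] | /(_ h)]; last by rewrite hH eqxx.
apply/eqP; rewrite eq_mulgV1; apply/eqP; apply: (Hfree (x := u)).
  by rewrite groupM ?groupV.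
by rewrite permM E permK.
Qed.

Lemma orb_stable (u : agent) h x : h \in H ->
  (h x \in [set k u | k : {perm agent} in H]) = (x \in [set k u | k : {perm agent} in H]).
Proof.
move=> hH; apply/imsetP/imsetP => [[k kH E] | [k kH ->]].
  exists (k * h^-1); first by rewrite groupM ?groupV.
  by rewrite permM -E permK.
by exists (k * h); [rewrite groupM | rewrite permM].
Qed.

Definition stable (S : {set agent}) := forall h x, h \in H -> x \in S -> h x \in S.
Definition goodf (S : {set agent}) (f : agent -> agent) :=
  [/\ forall x, f (f x) = x, forall h x, h \in H -> f (h x) = h (f x),
      forall x, x \in S -> (f x \in W) = (x \notin W) &
      forall x, x \notin S -> f x = x].

Lemma card_split (S O X : {set agent}) : O \subset S ->
  #|(S :\: O) :&: X| = #|S :&: X| - #|O :&: X|.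
Proof.
move=> OS; rewrite setIDAC cardsD (_ : S :&: X :&: O = O :&: X) //.
apply/setP => x; rewrite !inE; case xO: (x \in O); rewrite ?andbF ?andbT //=.
by rewrite (subsetP OS _ xO).
Qed.

Lemma card_inv (g : agent -> agent) (A B : {set agent}) : cancel g g ->
  (forall x, x \in A -> g x \in B) -> (forall x, x \in B -> g x \in A) ->
  #|A| = #|B|.
Proof.
move=> gg HA HB; have gi := can_inj gg.
apply/eqP; rewrite eqn_leq; apply/andP; split.
  rewrite -(card_imset A gi); apply: subset_leq_card.
  by apply/subsetP => y /imsetP [x xA ->]; apply: HA.
rewrite -(card_imset B gi); apply: subset_leq_card.
by apply/subsetP => y /imsetP [x xB ->]; apply: HB.
Qed.

Lemma step (S : {set agent}) w v : stable S -> w \in S -> v \in S ->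
  (v \in W) = (w \notin W) ->
  (forall h k, h \in H -> k \in H -> h v = k w -> k v = h w) ->
  (forall S' : {set agent}, (#|S'| < #|S|)%N -> stable S' -> #|S' :&: W| = #|S' :&: M| ->
     exists f, goodf S' f) ->
  #|S :&: W| = #|S :&: M| ->
  exists f, goodf S f.
Proof.
move=> HS wS vS Hvw Hcons IH Hbal.
pose Ow := [set k w | k : {perm agent} in H]; pose Ov := [set k v | k : {perm agent} in H].
pose g x := if x \in Ow then (odflt 1 [pick k in H | k w == x]) v
            else if x \in Ov then (odflt 1 [pick k in H | k v == x]) w else x.
have g1 h : h \in H -> g (h w) = h v.
  by move=> hH; rewrite /g imset_f // orbit_pick.
have g2 h : h \in H -> g (h v) = h w.
  move=> hH; rewrite /g; case: ifP => [/imsetP [k kH E] | _].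
    by rewrite E orbit_pick //; apply: Hcons.
  by rewrite imset_f // orbit_pick.
pose O := Ow :|: Ov.
have g3 x : x \notin O -> g x = x.
  by rewrite /O inE negb_or => /andP [/negbTE h1 /negbTE h2]; rewrite /g h1 h2.
have Ost h x : h \in H -> (h x \in O) = (x \in O).
  by move=> hH; rewrite /O !inE !orb_stable.
have gO x : x \in O -> g x \in O.
  rewrite /O => /setUP [] /imsetP [k kH ->].
    by rewrite g1 // inE imset_f ?orbT.
  by rewrite g2 // inE imset_f.
have gg : cancel g g.
  move=> x; case xO: (x \in O); last by rewrite !g3 ?xO.
  move: xO; rewrite /O => /setUP [] /imsetP [k kH ->].
    by rewrite g1 // g2.
  by rewrite g2 // g1.
have geq h x : h \in H -> g (h x) = h (g x).
  move=> hH; case xO: (x \in O); last by rewrite !g3 ?Ost ?xO.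
  move: xO; rewrite /O => /setUP [] /imsetP [k kH ->].
    by rewrite -permM g1 ?groupM // g1 // permM.
  by rewrite -permM g2 ?groupM // g2 // permM.
have gflip x : x \in O -> (g x \in W) = (x \notin W).
  rewrite /O => /setUP [] /imsetP [k kH ->].
    by rewrite g1 //; apply: side_flip.
  rewrite g2 //; apply: side_flip => //.
  by rewrite Hvw negbK.
have OS : O \subset S.
  apply/subsetP => x; rewrite /O => /setUP [] /imsetP [k kH ->]; exact: HS.
have wO : w \in O by rewrite /O inE; apply/orP; left; apply/imsetP; exists 1; rewrite ?perm1.
pose S' := S :\: O.
have ltS : (#|S'| < #|S|)%N.
  apply: proper_card; apply/properP; split; first by apply/subsetP => x /setDP [].
  by exists w => //; rewrite in_setD wO.
have stS' : stable S'.
  move=> h x hH; rewrite !in_setD => /andP [xO xS].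
  by rewrite Ost // xO HS.
have balO : #|O :&: W| = #|O :&: M|.
  apply: (card_inv gg) => x; rewrite !in_setI => /andP [xO xW]; rewrite gO //=.
    by rewrite inM gflip // xW.
  by rewrite gflip // -inM.
have balS' : #|S' :&: W| = #|S' :&: M|.
  by rewrite /S' !card_split // Hbal balO.
have [f [ff feq fS fnS]] := IH S' ltS stS' balS'.
have fS' x : x \in S' -> f x \in S'.
  move=> xS; apply: contraT => fxS.
  have E := fnS _ fxS; rewrite ff in E.
  by move: fxS; rewrite -E xS.
have fO x : x \notin O -> f x \notin O.
  move=> xO; case xS: (x \in S').
    by have := fS' _ xS; rewrite in_setD => /andP [].
  by rewrite fnS ?xS.
exists (fun x => if x \in O then g x else f x); split.
- move=> x; case xO: (x \in O); first by rewrite gO // gg.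
  by rewrite (negbTE (fO _ (negbT xO))) ff.
- move=> h x hH; rewrite Ost //; case: (x \in O); first exact: geq.
  exact: feq.
- move=> x xS; case xO: (x \in O); first exact: gflip.
  by apply: fS; rewrite in_setD xO xS.
- move=> x xS; have xO : x \in O = false.
    by apply/negbTE/negP => xO; move: xS; rewrite (subsetP OS _ xO).
  by rewrite xO fnS // in_setD (negbTE xS) andbF.
Qed.


Hypothesis npos : (0 < n)%N.
Hypothesis Hdich : (forall h x, h \in H -> (h x \in W) = (x \in W)) \/
  (exists2 t, t \in H & (t * t = 1 /\ forall x, (t x \in W) = (x \notin W))).

Lemma cardW : #|W| = n.
Proof.
have le : (n <= 2 * n)%N by apply: leq_pmull.
rewrite (_ : W = [set widen_ord le i | i : 'I_n]).
  rewrite card_imset ?card_ord //.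
  by move=> i j /(congr1 val) /= E; apply: val_inj.
apply/setP => x; rewrite inW; apply/idP/imsetP => [xn | [i _ ->]].
  by exists (Ordinal xn) => //; apply: val_inj.
by rewrite /= ltn_ord.
Qed.

Lemma cardM : #|M| = n.
Proof.
have -> : M = ~: W by apply/setP => x; rewrite !inE -leqNgt.
have E := cardsC W; rewrite card_ord cardW in E.
by apply/eqP; rewrite -(eqn_add2l n) E mul2n addnn.
Qed.

Lemma nonempty_side (S : {set agent}) (X Y : {set agent}) :
  (forall x, (x \in Y) = (x \notin X)) -> S != set0 ->
  #|S :&: X| = #|S :&: Y| -> exists x, x \in S :&: X.
Proof.
move=> HY S0 bal; apply/set0Pn/negP => /eqP E.
have E2 : S :&: Y = set0 by apply/eqP; rewrite -cards_eq0 -bal E cards0.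
move/negP: S0; apply; apply/eqP/setP => x; rewrite inE; apply/negP => xS.
case xX: (x \in X).
  have : x \in S :&: X by rewrite inE xS xX.
  by rewrite E inE.
have : x \in S :&: Y by rewrite inE xS HY xX.
by rewrite E2 inE.
Qed.

Lemma core_all (S : {set agent}) : stable S -> #|S :&: W| = #|S :&: M| ->
  exists f, goodf S f.
Proof.
have [k Hk] : exists k, (#|S| < k)%N by exists #|S|.+1.
elim: k S Hk => // k IH S HS stS bal.
case S0: (S == set0).
  exists id; split => // x; by rewrite (eqP S0) inE.
have IH' (S' : {set agent}) : (#|S'| < #|S|)%N -> stable S' ->
    #|S' :&: W| = #|S' :&: M| -> exists f, goodf S' f.
  by move=> lt; apply: IH; apply: leq_trans lt HS.
have [w] := nonempty_side (X := W) (Y := M) (@inM n) (negbT S0) bal.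
rewrite inE => /andP [wS wW].
case: Hdich => [Hpres | [t tH [tt tflip]]].
  have [v] : exists v, v \in S :&: M.
    apply: (nonempty_side (X := M) (Y := W) _ (negbT S0) (esym bal)).
    by move=> x; rewrite inM negbK.
  rewrite inE => /andP [vS vM]; rewrite inM in vM.
  apply: (step stS wS vS) => //.
    by rewrite (negbTE vM) wW.
  move=> h k' hH kH E; have := Hpres _ v hH; have := Hpres _ w kH.
  by rewrite E wW (negbTE vM) => ->.
apply: (step (v := t w) stS wS _ _ _ IH') => //.
- by apply: stS.
move=> h k' hH kH E.
have E1 : t * h = k'.
  apply/eqP; rewrite eq_mulgV1; apply/eqP; apply: (Hfree (x := w)).
    by rewrite !groupM ?groupV.
  by rewrite !permM E permK.
by rewrite -E1 permM -(permM t t) tt perm1.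
Qed.

Lemma exists_matching : exists mu : {perm agent},
  is_matching mu /\ forall h, h \in H -> perm_conj mu h = mu.
Proof.
have [f [ff feq fS _]] : exists f, goodf [set: agent] f.
  apply: core_all; first by [].
  by rewrite !setTI cardW cardM.
have fi : injective f by apply: (can_inj (g := f)).
have fl x : (f x \in W) = (x \notin W) by apply: fS; rewrite inE.
exists (perm fi); split.
  split.
  - apply/setP => a; apply/imsetP/idP => [[x xW ->] | aM].
      by rewrite permE inM fl xW.
    by exists (f a); [rewrite fl -inM | rewrite permE ff].
  - apply/setP => a; apply/imsetP/idP => [[x xM ->] | aW].
      by rewrite permE fl -inM.
    by exists (f a); [rewrite inM fl aW | rewrite permE ff].
  - by move=> z; rewrite !permE ff.
move=> h hH; apply/permP => x.
by rewrite /perm_conj !permM !(permE fi) feq ?groupV // permKV.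
Qed.

End Core.
Section Dich.
Local Open Scope group_scope.
Variable n : nat.
Local Notation agent := (agent n).
Local Notation W := (women n).
Local Notation M := (men n).

Lemma free_dvd (K : {group {perm agent}}) (A : {set agent}) :
  (forall k x, k \in K -> k x = x -> k = 1) ->
  (forall k x, k \in K -> x \in A -> k x \in A) -> (#|K| %| #|A|)%N.
Proof.
move=> Hf HA.
have acts : [acts K, on A | 'P].
  apply/actsP => k kK x /=; rewrite /aperm; apply/idP/idP => [kx | xA]; last exact: HA.
  by rewrite -(permK k x); apply: HA; rewrite ?groupV.
rewrite -(acts_sum_card_orbit acts); apply: dvdn_sum => T /imsetP [x xA ->].
rewrite card_orbit (_ : 'C_K[x | 'P] = 1) ?indexg1 //.
apply/trivgP/subsetP => k /setIP [kK /astab1P]; rewrite /aperm => kx.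
by rewrite (Hf _ _ kK kx) group1.
Qed.

Lemma sideX (s : {perm agent}) b : sideP s b -> forall k, sideP (s ^+ k) (odd k && b).
Proof.
move=> Hs; elim=> [|k IH] x; first by rewrite expg0 perm1.
rewrite expgS permM IH Hs /=.
by clear IH Hs; case: (odd k); case: b; case: (x \in W).
Qed.

Hypothesis npos : (0 < n)%N.
Hypothesis hodd : odd n.
Variable H : {group {perm agent}}.
Hypothesis HG : H \subset Gstar n.
Hypothesis Hfree : forall h x, h \in H -> h x = x -> h = 1.

Lemma dich : (forall h x, h \in H -> (h x \in W) = (x \in W)) \/
  (exists2 t, t \in H & (t * t = 1 /\ forall x, (t x \in W) = (x \notin W))).
Proof.
have sideG h : h \in H -> exists b, sideP h b.
  by move=> hH; apply/gstarP; apply: (subsetP HG).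
case: (boolP [exists s in H, [forall x, (s x \in W) == ~~ (x \in W)]]) => [|Hn].
  move=> /exists_inP [s sH /forallP Hs]; right.
  have Hs' : sideP s true by move=> x; rewrite (eqP (Hs x)).
  have ev : ~~ odd #[s].
    apply/negP => od; have := sideX Hs' #[s] (w0 npos).
    by rewrite expg_order perm1 od /=; case: (w0 npos \in W).
  have H2 : (2 %| #|H|)%N by apply: dvdn_trans (order_dvdG sH); rewrite dvdn2.
  have [t tH ot] := Cauchy (isT : prime 2) H2.
  have [bt Ht] := sideG _ tH.
  case: bt Ht => Ht.
    exists t => //; split; last by move=> x; rewrite Ht.
    by have := expg_order t; rewrite ot expgS expg1.
  exfalso.
  have : (#|<[t]>| %| #|W|)%N.
    apply: free_dvd.
      by move=> k x kK; apply: Hfree; apply: (subsetP _ _ kK); rewrite cycle_subG.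
    move=> k x /cycleP [i ->] xW.
    by rewrite (sideX Ht i) andbF.
  rewrite -/(#[t]) ot cardW dvdn2.
  by rewrite hodd.
left => h x hH; have [b Hb] := sideG _ hH.
case: b Hb => Hb; last by rewrite Hb.
move/negP: Hn; case; apply/exists_inP; exists h => //.
by apply/forallP => y; rewrite Hb.
Qed.

End Dich.
Section Final.
Local Open Scope group_scope.
Variable n : nat.
Local Notation agent := (agent n).
Local Notation W := (women n).
Local Notation M := (men n).
Hypothesis npos : (0 < n)%N.
Hypothesis hodd : odd n.

Definition Hq (q : profile n) : {group {perm agent}} := (GstarG n :&: StabG q)%G.

Lemma inHq q h : (h \in Hq q) = (h \in Gstar n) && (profile_act q h == q).
Proof. by rewrite /Hq /= !inE. Qed.

Lemma good_exists (q : profile n) : is_profile q -> exists mu : {perm agent},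
  is_matching mu /\ forall h, h \in Hq q -> perm_conj mu h = mu.
Proof.
move=> Hp.
have HG : Hq q \subset Gstar n by apply/subsetP => h; rewrite inHq => /andP [].
have Hf : forall h x, h \in Hq q -> h x = x -> h = 1.
  move=> h x; rewrite inHq => /andP [hG /eqP hq] hx; exact: (stab_free npos Hp hG hq hx).
exact: (exists_matching HG Hf (dich npos hodd HG Hf)).
Qed.

Definition goodb (q : profile n) (mu : {perm agent}) :=
  [&& mu @: W == M, mu @: M == W, [forall z, mu (mu z) == z] &
      [forall h in Hq q, perm_conj mu h == mu]].

Definition sel (q : profile n) := odflt 1 [pick mu | goodb q mu].

Lemma sel_good q : is_profile q ->
  is_matching (sel q) /\ forall h, h \in Hq q -> perm_conj (sel q) h = sel q.
Proof.
move=> Hp; have [mu [[H1 H2 H3] H4]] := good_exists Hp.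
rewrite /sel; case: pickP => [m /and4P [/eqP E1 /eqP E2 /forallP E3 /forall_inP E4] | /(_ mu)] /=.
  by split; [split => // z; apply/eqP | move=> h /E4 /eqP].
rewrite /goodb H1 H2 !eqxx /=.
have -> : [forall z, mu (mu z) == z] by apply/forallP => z; rewrite H3.
by have -> : [forall h in Hq q, perm_conj mu h == mu] by apply/forall_inP => h /H4 ->.
Qed.

Definition orb (p : profile n) := [set profile_act p phi | phi in Gstar n].

Lemma orb_act p psi : psi \in Gstar n -> orb (profile_act p psi) = orb p.
Proof.
move=> psiG; apply/setP => q; apply/imsetP/imsetP => [[phi phiG ->] | [phi phiG ->]].
  exists (psi * phi); first by rewrite (@groupM _ (GstarG n)).
  by rewrite profile_actM.
exists (psi^-1 * phi); first by rewrite (@groupM _ (GstarG n)) ?(@groupV _ (GstarG n)).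
by rewrite profile_actM mulKVg.
Qed.

Definition rep (p : profile n) := odflt p [pick q in orb p].

Lemma self_orb p : p \in orb p.
Proof. by apply/imsetP; exists 1; rewrite ?profile_act1 ?(@group1 _ (GstarG n)). Qed.

Lemma rep_in p : rep p \in orb p.
Proof. by rewrite /rep; case: pickP => [q //|/(_ p) /=]; rewrite self_orb. Qed.

Lemma rep_act p psi : psi \in Gstar n -> rep (profile_act p psi) = rep p.
Proof.
move=> psiG; rewrite /rep orb_act //.
by case: pickP => [//| /(_ p)]; rewrite self_orb.
Qed.

Definition tr (p : profile n) :=
  odflt 1 [pick phi in Gstar n | profile_act (rep p) phi == p].

Lemma tr_spec p : tr p \in Gstar n /\ profile_act (rep p) (tr p) = p.
Proof.
have /imsetP [phi0 phiG E] := rep_in p.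
rewrite /tr; case: pickP => [phi /andP [G /eqP E'] | /(_ phi0^-1)] //=.
rewrite (@groupV _ (GstarG n)) phiG E profile_actM mulgV.
have -> : profile_act p 1 = p by apply: profile_act1.
by rewrite eqxx.
Qed.

Lemma rep_profile p : is_profile p -> is_profile (rep p).
Proof.
by move=> Hp; have /imsetP [phi0 phiG ->] := rep_in p; apply: profile_act_profile.
Qed.

Lemma perm_conjM (mu a b : {perm agent}) :
  perm_conj mu (a * b) = perm_conj (perm_conj mu a) b.
Proof. by rewrite /perm_conj invMg !mulgA. Qed.

Lemma matchingP (mu : {perm agent}) : is_matching mu <->
  (forall x, (mu x \in W) = (x \notin W)) /\ (forall x, mu (mu x) = x).
Proof.
split.
  move=> [H1 H2 H3]; split => // x; case xW: (x \in W).
    by apply/negbTE; rewrite -inM -H1 imset_f.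
  by rewrite -H2 imset_f // inM xW.
move=> [fl ff]; split => //.
- apply/setP => a; apply/imsetP/idP => [[x xW ->] | aM].
    by rewrite inM fl xW.
  by exists (mu a); [rewrite fl -inM | rewrite ff].
- apply/setP => a; apply/imsetP/idP => [[x xM ->] | aW].
    by rewrite fl -inM.
  by exists (mu a); [rewrite inM fl aW | rewrite ff].
Qed.

Lemma matching_conj (mu phi : {perm agent}) : is_matching mu -> phi \in Gstar n ->
  is_matching (perm_conj mu phi).
Proof.
move=> /matchingP [fl ff] /gstarP [b Hb]; apply/matchingP; split => x;
  rewrite /perm_conj !permM.
  by rewrite Hb fl (side_inv Hb); case: b {Hb}; case: (x \in W).
by rewrite permK ff permKV.
Qed.

Definition Fm (p : profile n) : {set {perm agent}} :=
  [set perm_conj (sel (rep p)) (tr p)].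

Lemma Fm_ok : mechanism Fm /\ resolute Fm /\ symmetric_mech Fm.
Proof.
split; [|split].
- move=> p Hp mu /set1P ->; apply: matching_conj; last by case: (tr_spec p).
  by case: (sel_good (rep_profile Hp)).
- by move=> p _; rewrite cards1.
move=> p psi Hp psiG; rewrite /Fm /set_conj imset_set1 rep_act //.
congr [set _].
have [G1 E1] := tr_spec p.
have [G2 E2] := tr_spec (profile_act p psi); rewrite rep_act // in E2.
set q := rep p in E1 E2 *; set phi := tr p in G1 E1 *.
set phi' := tr (profile_act p psi) in G2 E2 *.
pose s := phi' * (phi * psi)^-1.
have sH : s \in Hq q.
  rewrite inHq; apply/andP; split.
    by rewrite (@groupM _ (GstarG n)) ?(@groupV _ (GstarG n)) ?(@groupM _ (GstarG n)).
  by rewrite /s -profile_actM E2 -{1}E1 !profile_actM mulgA mulgV profile_act1.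
have -> : phi' = s * (phi * psi) by rewrite /s mulgKV.
have [_ Hs] := sel_good (rep_profile Hp).
by rewrite perm_conjM Hs // perm_conjM.
Qed.

End Final.

Unset Implicit Arguments.
Set Strict Implicit.

Theorem theorem3 (n : nat) (hn : (2 <= n)%N) (hodd : odd n) :
  exists F : profile n -> {set {perm agent n}},
    mechanism F /\ resolute F /\ symmetric_mech F.
Proof.
have npos : (0 < n)%N by apply: leq_trans hn.
exists (@Fm n); exact: (Fm_ok npos hodd).
Qed.
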